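(* Let $\alpha>0$, $\gamma<0$, $\theta=(\alpha,-(\alpha+\gamma)/4,\gamma)$, and let $\mathcal{R}_\theta(1)$ be the moduli space of $\theta$-semistable representations of $\mathbf{Q}$ of dimension vector $(1,4,1)$. If $\gamma<-\alpha$, the points of $\mathcal{R}_\theta(1)$ are exactly the (isomorphism classes of) representations that are globally surjective and locally injective. If $\gamma>-\alpha$, the points of $\mathcal{R}_\theta(1)$ are exactly the representations that are globally injective and locally surjective.
   Context: The quiver $\mathbf{Q}$ has vertices $-1,0,1$, arrows $\eta_0,\dots,\eta_3:-1\to0$, $\phi_0,\dots,\phi_3:0\to1$ and relations $\phi_i\eta_j+\phi_j\eta_i=0$; a representation consists of vector spaces $V_{-1},V_0,V_1$ and linear maps $f_i:V_{-1}\to V_0$, $g_i:V_0\to V_1$ with $g_if_j+g_jf_i=0$. $R$ is globally injective (resp. surjective) if $\sum\lambda_if_i$ is injective (resp. $\sum\lambda_ig_i$ surjective) for all $\lambda\in\mathbb{C}^4\setminus\{0\}$; locally injective (resp. surjective) if this holds for all $[\lambda]\in\mathbb{P}^3$ outside a closed subset of codimension at least 2. $R$ is $\theta$-semistable (resp. stable) if $\theta\cdot\dim R=0$ and $\theta\cdot\dim S\le0$ for all subrepresentations $S$ (resp. $<0$ for all nonzero proper $S$); $\mathcal{R}_\theta(1)$ is King's GIT moduli space. *)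

(* Defs.v *)
From HB Require Import structures.
From mathcomp Require Import all_boot all_order all_algebra.
From mathcomp Require Import complex Rstruct.
From mathcomp Require Import mpoly.

Set Implicit Arguments.
Unset Strict Implicit.
Unset Printing Implicit Defensive.

Import GRing.Theory Num.Theory.
Local Open Scope ring_scope.

Definition RR : rcfType := Rdefinitions.R.
Definition CC : numClosedFieldType := RR[i].

(* Representations of the quiver Q with vertices -1, 0, 1, arrows
   eta_0..eta_3 : -1 -> 0, phi_0..phi_3 : 0 -> 1.
   A representation of dimension vector (n, m, k) is given, after a choice
   of bases, by V_{-1} = C^n, V_0 = C^m, V_1 = C^k (row vectors) and
   matrices f i : 'M_(n,m), g i : 'M_(m,k), acting on row vectors by
   v |-> v *m f i, v |-> v *m g i. The composite g_i o f_j is thus the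
   matrix f j *m g i. *)

Definition is_rep n m k (f : 'I_4 -> 'M[CC]_(n, m)) (g : 'I_4 -> 'M[CC]_(m, k))
  : Prop :=
  forall i j : 'I_4, f j *m g i + f i *m g j = 0.

(* Subrepresentations: triples of subspaces (encoded as row spaces of square
   matrices) stable under all arrows. *)
Definition is_subrep n m k (f : 'I_4 -> 'M[CC]_(n, m)) (g : 'I_4 -> 'M[CC]_(m, k))
  (Sm : 'M[CC]_n) (S0 : 'M[CC]_m) (S1 : 'M[CC]_k) : Prop :=
  forall i : 'I_4, (Sm *m f i <= S0)%MS /\ (S0 *m g i <= S1)%MS.

Definition theta_dot (th : RR * RR * RR) (a b c : nat) : RR :=
  th.1.1 * a%:R + th.1.2 * b%:R + th.2 * c%:R.

Definition semistable (th : RR * RR * RR) n m k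
  (f : 'I_4 -> 'M[CC]_(n, m)) (g : 'I_4 -> 'M[CC]_(m, k)) : Prop :=
  theta_dot th n m k = 0 /\
  forall Sm S0 S1, is_subrep f g Sm S0 S1 ->
    theta_dot th (\rank Sm) (\rank S0) (\rank S1) <= 0.

Definition stable (th : RR * RR * RR) n m k
  (f : 'I_4 -> 'M[CC]_(n, m)) (g : 'I_4 -> 'M[CC]_(m, k)) : Prop :=
  theta_dot th n m k = 0 /\
  forall Sm S0 S1, is_subrep f g Sm S0 S1 ->
    (\rank Sm, \rank S0, \rank S1) != (0%N, 0%N, 0%N) ->
    (\rank Sm, \rank S0, \rank S1) != (n, m, k) ->
    theta_dot th (\rank Sm) (\rank S0) (\rank S1) < 0.

Definition lincomb p q (lam : 'rV[CC]_4) (f : 'I_4 -> 'M[CC]_(p, q)) : 'M[CC]_(p, q) :=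
  \sum_(i < 4) lam 0 i *: f i.

(* A matrix M : 'M_(p,q) acting by v |-> v *m M is injective iff its rows are
   free, surjective iff its rows span C^q. *)

(* Zariski topology on P^3 = (C^4 \ 0)/C^*.  Subsets of P^3 are encoded as
   predicates on C^4 (only their values on nonzero vectors matter). *)
Definition pset := 'rV[CC]_4 -> Prop.

Definition pt_eval (p : {mpoly CC[4]}) (x : 'rV[CC]_4) : CC := p.@[fun i => x 0 i].

Definition pclosed (Z : pset) : Prop :=
  exists F : {mpoly CC[4]} -> Prop,
    (forall p, F p -> exists d : nat, p \is d.-homog) /\
    (forall x : 'rV[CC]_4, x != 0 -> (Z x <-> forall p, F p -> pt_eval p x = 0)).

Definition psubset (Z W : pset) : Prop := forall x : 'rV[CC]_4, x != 0 -> Z x -> W x.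

Definition pstrict (Z W : pset) : Prop := psubset Z W /\ ~ psubset W Z.

Definition pirreducible (Z : pset) : Prop :=
  pclosed Z /\ (exists x : 'rV[CC]_4, x != 0 /\ Z x) /\
  forall Z1 Z2 : pset, pclosed Z1 -> pclosed Z2 ->
    psubset Z (fun x => Z1 x \/ Z2 x) -> psubset Z Z1 \/ psubset Z Z2.

(* Z (closed) has dimension <= 1, i.e. codimension >= 2 in P^3: there is no
   chain W0 < W1 < W2 of irreducible closed subsets contained in Z. *)
Definition pcodim_ge2 (Z : pset) : Prop :=
  pclosed Z /\
  ~ (exists W0 W1 W2 : pset,
        pirreducible W0 /\ pirreducible W1 /\ pirreducible W2 /\
        pstrict W0 W1 /\ pstrict W1 W2 /\ psubset W2 Z).

Definition globally_injective n m (f : 'I_4 -> 'M[CC]_(n, m)) : Prop :=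
  forall lam : 'rV[CC]_4, lam != 0 -> row_free (lincomb lam f).

Definition globally_surjective m k (g : 'I_4 -> 'M[CC]_(m, k)) : Prop :=
  forall lam : 'rV[CC]_4, lam != 0 -> row_full (lincomb lam g).

Definition locally_injective n m (f : 'I_4 -> 'M[CC]_(n, m)) : Prop :=
  exists Z : pset, pcodim_ge2 Z /\
    forall lam : 'rV[CC]_4, lam != 0 -> ~ Z lam -> row_free (lincomb lam f).

Definition locally_surjective m k (g : 'I_4 -> 'M[CC]_(m, k)) : Prop :=
  exists Z : pset, pcodim_ge2 Z /\
    forall lam : 'rV[CC]_4, lam != 0 -> ~ Z lam -> row_full (lincomb lam g).

(* Main.v *)
Require Import Defs.
From HB Require Import structures.
From mathcomp Require Import all_boot all_order all_algebra.
From mathcomp Require Import complex Rstruct.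
From mathcomp Require Import mpoly.
From Stdlib Require Import Classical.
From mathcomp Require Import lra.
Import GRing.Theory Num.Theory.
Local Open Scope ring_scope.

Lemma pt_evalZ d (p : {mpoly CC[4]}) (c : CC) (x : 'rV[CC]_4) :
  p \is d.-homog -> pt_eval p (c *: x) = c ^+ d * pt_eval p x.
Proof.
move=> /dhomogP hp; rewrite /pt_eval !mevalE big_distrr /=.
apply: eq_big_seq => m /hp hm.
rewrite mulrCA; congr (_ * _).
under eq_bigr do rewrite mxE exprMn.
rewrite big_split /=; congr (_ * _). rewrite prodrXr; congr (_ ^+ _); rewrite -hm; exact: (esym (mdegE m)).
Qed.

Lemma line_poly (p : {mpoly CC[4]}) (x y : 'rV[CC]_4) :
  exists Q : {poly CC}, forall t, Q.[t] = pt_eval p (x + t *: y).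
Proof.
exists (\sum_(m <- msupp p) p@_m *: \prod_(i < 4) ((x 0 i)%:P + (y 0 i) *: 'X) ^+ m i).
move=> t; rewrite /pt_eval mevalE horner_sum; apply: eq_bigr => m _.
rewrite hornerZ horner_prod; congr (_ * _); apply: eq_bigr => i _.
by rewrite horner_exp hornerD hornerC hornerZ hornerX !mxE mulrC.
Qed.

Lemma poly_inf (Q : {poly CC}) : (forall t, t != 0 -> Q.[t] = 0) -> Q = 0.
Proof.
move=> hQ; apply/eqP; apply/negPn/negP => nz.
have A : all (root Q) [seq (i.+1)%:R | i <- iota 0 (size Q)].
  apply/allP => z /mapP [i _ ->]; apply/rootP/hQ.
  by rewrite pnatr_eq0.
have U : uniq [seq (i.+1)%:R : CC | i <- iota 0 (size Q)].
  rewrite map_inj_uniq ?iota_uniq // => a b /eqP; rewrite eqr_nat => /eqP [].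
  done.
have := max_poly_roots nz A U.
by rewrite size_map size_iota ltnn.
Qed.

Lemma X_homog (i : 'I_4) : ('X_i : {mpoly CC[4]}) \is 1%N.-homog.
Proof. rewrite dhomogX; apply/eqP; exact: mdeg1. Qed.

Lemma lin_homog (a : 'I_4 -> CC) : (\sum_k a k *: 'X_k : {mpoly CC[4]}) \is 1%N.-homog.
Proof.
by apply: rpred_sum => k _; apply: rpredZ; apply: X_homog.
Qed.

Lemma pt_eval_lin (a : 'I_4 -> CC) x :
  pt_eval (\sum_k a k *: 'X_k) x = \sum_k a k * x 0 k.
Proof.
rewrite /pt_eval raddf_sum; apply: eq_bigr => k _.
exact: (etrans (mevalZ _ _ _) (congr1 _ (mevalXU _ _))).
Qed.

Lemma closed_ker k (L : 'M[CC]_(4, k)) : pclosed (fun x => x *m L = 0).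
Proof.
exists (fun p => exists r, p = \sum_i L i r *: 'X_i); split.
  by move=> p [r ->]; exists 1%N; apply: lin_homog.
move=> x _; split.
  move=> h p [r ->]; rewrite pt_eval_lin.
  transitivity ((x *m L) 0 r); last by rewrite h mxE.
  by rewrite mxE; apply: eq_bigr => l _; rewrite mulrC.
move=> h; apply/matrixP => i r; rewrite ord1 !mxE.
have := h _ (ex_intro _ r erefl); rewrite pt_eval_lin => e; rewrite -[RHS]e.
by apply: eq_bigr => l _; rewrite mulrC.
Qed.

Lemma pt_eval2 (a b : CC) i j x :
  pt_eval (a *: 'X_i - b *: 'X_j) x = a * x 0 i - b * x 0 j.
Proof.
rewrite /pt_eval.
rewrite (etrans (mevalB _ _ _) (congr2 (fun u v => u - v) (mevalZ _ _ _) (mevalZ _ _ _))).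
by rewrite !mevalXU.
Qed.

Definition Zpt (v : 'rV[CC]_4) : pset := fun x => forall i j, x 0 i * v 0 j = x 0 j * v 0 i.

Lemma closed_pt v : pclosed (Zpt v).
Proof.
exists (fun p => exists i j, p = v 0 j *: 'X_i - v 0 i *: 'X_j); split.
  move=> p [i [j ->]]; exists 1%N; apply: rpredB; apply: rpredZ; apply: X_homog.
move=> x _; split.
  by move=> h p [i [j ->]]; rewrite pt_eval2 (mulrC (v 0 j)) (mulrC (v 0 i)) h subrr.
move=> h i j; apply/eqP; rewrite -subr_eq0.
have := h _ (ex_intro _ i (ex_intro _ j erefl)); rewrite pt_eval2 => <-.
by rewrite (mulrC (v 0 j)) (mulrC (v 0 i)).
Qed.

Lemma Zpt_prop v x : v != 0 -> Zpt v x -> exists k, x = k *: v.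
Proof.
move=> vnz h.
have [j hj] : exists j, v 0 j != 0.
  apply/existsP; move: vnz; apply: contraR; rewrite negb_exists => /forallP H.
  by apply/eqP/matrixP => a b; rewrite ord1 mxE; apply/eqP; have := H b; rewrite negbK.
exists (x 0 j / v 0 j); apply/matrixP => a b; rewrite ord1 mxE.
by rewrite -mulrA mulrC -mulrA (mulrC (v 0 b)) -h mulrCA mulVf // mulr1.
Qed.

Lemma Zpt_self v k : Zpt v (k *: v).
Proof. by move=> i j; rewrite !mxE mulrAC. Qed.

Lemma closed_union (Z1 Z2 : pset) : pclosed Z1 -> pclosed Z2 ->
  pclosed (fun x => Z1 x \/ Z2 x).
Proof.
move=> [F1 [h1 e1]] [F2 [h2 e2]].
exists (fun p => exists p1 p2, F1 p1 /\ F2 p2 /\ p = p1 * p2); split.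
  move=> p [p1 [p2 [f1 [f2 ->]]]].
  have [d1 hd1] := h1 _ f1; have [d2 hd2] := h2 _ f2.
  by exists (d1 + d2)%N; apply: dhomogM.
move=> x xnz; split.
  move=> [z1|z2] p [p1 [p2 [f1 [f2 ->]]]]; rewrite /pt_eval mevalM.
    by have := (proj1 (e1 x xnz) z1 p1 f1); rewrite /pt_eval => ->; rewrite mul0r.
  by have := (proj1 (e2 x xnz) z2 p2 f2); rewrite /pt_eval => ->; rewrite mulr0.
move=> h; case: (classic (Z1 x)) => [z1|nz1]; first by left.
right; apply/(e2 x xnz) => p2 f2.
have [p1 [f1 np1]] : exists p1, F1 p1 /\ pt_eval p1 x <> 0.
  apply: NNPP => H; apply: nz1; apply/(e1 x xnz) => p1 f1.
  by apply: NNPP => H2; apply: H; exists p1.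
have := h (p1 * p2) (ex_intro _ p1 (ex_intro _ p2 (conj f1 (conj f2 erefl)))).
rewrite /pt_eval mevalM => /eqP; rewrite mulf_eq0 => /orP [/eqP //|/eqP //].
Qed.

Lemma closed_scale (Z : pset) x c : pclosed Z -> x != 0 -> c != 0 -> Z x -> Z (c *: x).
Proof.
move=> [F [hF e]] xnz cnz zx.
have cxnz : c *: x != 0 by rewrite scaler_eq0 negb_or cnz.
apply/(e _ cxnz) => p fp; have [d hd] := hF _ fp.
by rewrite (pt_evalZ _ _ _ _ hd) (proj1 (e x xnz) zx p fp) mulr0.
Qed.

Lemma pclosed_ext (Z Z' : pset) : (forall x, x != 0 -> (Z x <-> Z' x)) -> pclosed Z -> pclosed Z'.
Proof.
move=> e [F [hF eF]]; exists F; split => // x xnz; rewrite -(e x xnz); exact: eF.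
Qed.

Definition Ucov (Z0 : pset) (h : CC -> pset) (rs : seq CC) : pset :=
  fun x => Z0 x \/ exists2 r, r \in rs & h r x.

Lemma closed_Ucov Z0 h rs : pclosed Z0 -> (forall r, pclosed (h r)) -> pclosed (Ucov Z0 h rs).
Proof.
move=> c0 ch; elim: rs => [|r rs IH].
  apply: (pclosed_ext _ _ _ c0) => x _; rewrite /Ucov; split; first by left.
  by case=> // -[r].
apply: (pclosed_ext (fun x => h r x \/ Ucov Z0 h rs x) _ _ (closed_union _ _ (ch r) IH)).
move=> x _; rewrite /Ucov; split.
  case=> [hr|[z0|[r' r'in hr']]]; first by right; exists r => //; rewrite inE eqxx.
    by left.
  by right; exists r' => //; rewrite inE r'in orbT.
case=> [z0|[r' ]]; first by right; left.
rewrite inE => /orP [/eqP ->|r'in] hr'; first by left.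
by right; right; exists r'.
Qed.

Lemma irr_cover (W Z0 : pset) (h : CC -> pset) (rs : seq CC) :
  pirreducible W -> pclosed Z0 -> (forall r, pclosed (h r)) ->
  psubset W (Ucov Z0 h rs) ->
  psubset W Z0 \/ exists2 r, r \in rs & psubset W (h r).
Proof.
move=> [cW [neW irr]] c0 ch; elim: rs => [|r rs IH] sub.
  left => x xnz wx; case: (sub x xnz wx) => // -[r]; by [].
have sub' : psubset W (fun x => h r x \/ Ucov Z0 h rs x).
  move=> x xnz wx; case: (sub x xnz wx) => [z0|[r' ]]; first by right; left.
  rewrite inE => /orP [/eqP ->|r'in] hr'; first by left.
  by right; right; exists r'.
case: (irr _ _ (ch r) (closed_Ucov _ _ rs c0 ch) sub') => [hr|hu].
  by right; exists r => //; rewrite inE eqxx.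
case: (IH hu) => [h0|[r' r'in hr']]; first by left.
by right; exists r' => //; rewrite inE r'in orbT.
Qed.

Definition indep (x1 x2 : 'rV[CC]_4) := forall a b : CC, a *: x1 + b *: x2 = 0 -> a = 0 /\ b = 0.
Definition Dim2 (K : pset) := forall x1 x2 y, K x1 -> K x2 -> K y -> indep x1 x2 ->
  exists a b, y = a *: x1 + b *: x2.

Lemma comb_scale (x1 x2 : 'rV[CC]_4) s t : s != 0 ->
  s *: x1 + t *: x2 = s *: (x1 + (t / s) *: x2).
Proof. by move=> sn; rewrite scalerDr scalerA mulrCA mulfV // mulr1. Qed.

Lemma not_in_closed (W : pset) y : pclosed W -> y != 0 -> ~ W y ->
  exists F : {mpoly CC[4]} -> Prop, (forall p, F p -> exists d : nat, p \is d.-homog) /\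
   (forall x, x != 0 -> (W x <-> forall p, F p -> pt_eval p x = 0)) /\
   exists p, F p /\ pt_eval p y <> 0.
Proof.
move=> [F [hF eF]] ynz nwy; exists F; split => //; split => //.
apply: NNPP => H; apply: nwy; apply/(eF y ynz) => p fp.
by apply: NNPP => H2; apply: H; exists p.
Qed.

Lemma no_two_points (K W : pset) y x1 x2 :
  Dim2 K -> pirreducible W -> psubset W K -> y != 0 -> K y -> ~ W y ->
  x1 != 0 -> x2 != 0 -> W x1 -> W x2 -> indep x1 x2 -> False.
Proof.
move=> d2 irrW sWK ynz ky nwy x1nz x2nz wx1 wx2 ind.
have irrW' := irrW; move: irrW' => [cW _].
have [F [hF [eF [p [fp py]]]]] := not_in_closed _ _ cW ynz nwy.
have [d hd] := hF p fp.
have p1 : pt_eval p x1 = 0 by apply: (proj1 (eF x1 x1nz) wx1).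
have p2 : pt_eval p x2 = 0 by apply: (proj1 (eF x2 x2nz) wx2).
have [Q hQ] := line_poly p x1 x2.
have [a [b ye]] := d2 x1 x2 y (sWK _ x1nz wx1) (sWK _ x2nz wx2) ky ind.
have Qnz : Q != 0.
  have [a0|anz] := eqVneq a 0.
    by exfalso; apply: py; rewrite ye a0 scale0r add0r (pt_evalZ _ _ _ _ hd) p2 mulr0.
  apply/negP => /eqP Q0; apply: py.
  by rewrite ye comb_scale // (pt_evalZ _ _ _ _ hd) -hQ Q0 horner0 mulr0.
have [rs Qe] := closed_field_poly_normal Q.
have lcnz : lead_coef Q != 0 by rewrite lead_coef_eq0.
have cov : psubset W (Ucov (Zpt x2) (fun r => Zpt (x1 + r *: x2)) rs).
  move=> w wnz ww.
  have [s [t we]] := d2 x1 x2 w (sWK _ x1nz wx1) (sWK _ x2nz wx2) (sWK _ wnz ww) ind.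
  have [s0|snz] := eqVneq s 0.
    by left; rewrite we s0 scale0r add0r; apply: Zpt_self.
  right; exists (t / s); last by rewrite we comb_scale //; apply: Zpt_self.
  have pw : pt_eval p w = 0 by apply: (proj1 (eF w wnz) ww).
  move: pw; rewrite we comb_scale // (pt_evalZ _ _ _ _ hd) -hQ.
  move=> /eqP; rewrite mulf_eq0 expf_eq0 (negbTE snz) andbF /= => /eqP.
  rewrite Qe hornerZ => /eqP; rewrite mulf_eq0 (negbTE lcnz) /= => /eqP r0.
  by rewrite -root_prod_XsubC; apply/rootP.
have c0 := closed_pt x2.
case: (irr_cover _ _ _ _ irrW c0 (fun r => closed_pt _) cov) => [h|[r _ h]].
  have [k ke] := Zpt_prop _ _ x2nz (h _ x1nz wx1).
  have := ind 1 (- k); rewrite scale1r ke scaleNr subrr => /(_ erefl) [].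
  by move=> /eqP; rewrite oner_eq0.
have vnz : x1 + r *: x2 != 0.
  apply/eqP => e; have [] := ind 1 r; first by rewrite scale1r.
  by move=> /eqP; rewrite oner_eq0.
have [k ke] := Zpt_prop _ _ vnz (h _ x2nz wx2).
have [k0 kr] : k = 0 /\ k * r - 1 = 0.
  apply: ind; by rewrite scalerBl scale1r -scalerA addrA -scalerDr -ke subrr.
by move: kr; rewrite k0 mul0r sub0r => /eqP; rewrite oppr_eq0 oner_eq0.
Qed.

Lemma not_psubset (Z W : pset) : ~ psubset Z W -> exists x, x != 0 /\ Z x /\ ~ W x.
Proof.
move=> H; apply: NNPP => H2; apply: H => x xnz zx; apply: NNPP => nw.
by apply: H2; exists x.
Qed.

Lemma codim2 (K : pset) : pclosed K -> Dim2 K -> pcodim_ge2 K.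
Proof.
move=> cK d2; split => // -[W0 [W1 [W2 [i0 [i1 [i2 [[s01 ns01] [[s12 ns12] s2K]]]]]]]].
have [y [ynz [w2y nw1y]]] := not_psubset _ _ ns12.
have [z [znz [w1z nw0z]]] := not_psubset _ _ ns01.
have i0' := i0; move: i0' => [c0 [[x0 [x0nz w0x0]] _]].
have s1K : psubset W1 K by move=> x xnz w1x; apply: s2K => //; apply: s12.
case: (classic (indep x0 z)) => ind.
  exact: (no_two_points _ _ y x0 z d2 i1 s1K ynz (s2K _ ynz w2y) nw1y x0nz znz
           (s01 _ x0nz w0x0) w1z ind).
have [a [b [e nab]]] : exists a b, a *: x0 + b *: z = 0 /\ ~ (a = 0 /\ b = 0).
  apply: NNPP => H; apply: ind => a b e; apply: NNPP => H2; apply: H.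
  by exists a, b.
have [b0|bnz] := eqVneq b 0.
  move: e; rewrite b0 scale0r addr0 => /eqP; rewrite scaler_eq0 (negbTE x0nz) orbF.
  by move=> /eqP a0; apply: nab.
have ze : z = (- a / b) *: x0.
  apply: (scalerI bnz); rewrite scalerA mulrCA mulfV // mulr1 scaleNr.
  by apply/eqP; rewrite eq_sym -subr_eq0 -opprD e oppr0.
have cnz : - a / b != 0.
  apply/eqP => c0'; move: znz; rewrite ze c0' scale0r eqxx //.
apply: nw0z; rewrite ze; exact: closed_scale.
Qed.

Lemma nindep_prop (x0 z : 'rV[CC]_4) : x0 != 0 -> z != 0 -> ~ indep x0 z ->
  exists c, c != 0 /\ z = c *: x0.
Proof.
move=> x0nz znz ind.
have [a [b [e nab]]] : exists a b, a *: x0 + b *: z = 0 /\ ~ (a = 0 /\ b = 0).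
  apply: NNPP => H; apply: ind => a b e; apply: NNPP => H2; apply: H.
  by exists a, b.
have [b0|bnz] := eqVneq b 0.
  move: e; rewrite b0 scale0r addr0 => /eqP; rewrite scaler_eq0 (negbTE x0nz) orbF.
  by move=> /eqP a0; exfalso; apply: nab.
have ze : z = (- a / b) *: x0.
  apply: (scalerI bnz); rewrite scalerA mulrCA mulfV // mulr1 scaleNr.
  by apply/eqP; rewrite eq_sym -subr_eq0 -opprD e oppr0.
exists (- a / b); split => //.
apply/eqP => c0'; move: znz; rewrite ze c0' scale0r eqxx //.
Qed.

Lemma irr_lin k (M : 'M[CC]_(4, k)) (x0 : 'rV[CC]_4) : x0 != 0 -> x0 *m M = 0 ->
  pirreducible (fun x => x *m M = 0).
Proof.
move=> x0nz x0M; split; first exact: closed_ker.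
split; first by exists x0.
move=> Z1 Z2 c1 c2 sub; apply: NNPP => H.
have [n1 n2] : ~ psubset (fun x => x *m M = 0) Z1 /\ ~ psubset (fun x => x *m M = 0) Z2.
  by split => h; apply: H; [left|right].
have [x [xnz [wx nz1x]]] := not_psubset _ _ n1.
have [y [ynz [wy nz2y]]] := not_psubset _ _ n2.
have [F1 [hF1 [eF1 [p1 [fp1 p1x]]]]] := not_in_closed _ _ c1 xnz nz1x.
have [F2 [hF2 [eF2 [p2 [fp2 p2y]]]]] := not_in_closed _ _ c2 ynz nz2y.
have [d2 hd2] := hF2 p2 fp2.
case: (classic (indep x y)) => ind; last first.
  have [c [cnz ye]] := nindep_prop _ _ xnz ynz ind.
  case: (sub x xnz wx) => // z2x; apply: nz2y; rewrite ye; exact: closed_scale.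
have [Q1 hQ1] := line_poly p1 x y.
have [Q2 hQ2] := line_poly p2 x y.
have [R2 hR2] := line_poly p2 y x.
have Q1nz : Q1 != 0.
  by apply/eqP => e; apply: p1x; rewrite -(addr0 x) -(scale0r y) -hQ1 e horner0.
have Q2nz : Q2 != 0.
  apply/eqP => e; suff : R2 = 0.
    by move=> e2; apply: p2y; rewrite -(addr0 y) -(scale0r x) -hR2 e2 horner0.
  apply: poly_inf => s snz; rewrite hR2.
  have -> : y + s *: x = s *: (x + s^-1 *: y).
    by rewrite scalerDr scalerA mulfV // scale1r addrC.
  by rewrite (pt_evalZ _ _ _ _ hd2) -hQ2 e horner0 mulr0.
have : Q1 * Q2 = 0.
  apply: poly_inf => t _; rewrite hornerM hQ1 hQ2.
  have vnz : x + t *: y != 0.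
    apply/eqP => e; have [] := ind 1 t; first by rewrite scale1r.
    by move=> /eqP; rewrite oner_eq0.
  have wv : (x + t *: y) *m M = 0 by rewrite mulmxDl -scalemxAl wx wy scaler0 addr0.
  case: (sub _ vnz wv) => hz.
    by rewrite (proj1 (eF1 _ vnz) hz p1 fp1) mul0r.
  by rewrite (proj1 (eF2 _ vnz) hz p2 fp2) mulr0.
by move=> /eqP; rewrite mulf_eq0 (negbTE Q1nz) (negbTE Q2nz).
Qed.

Definition Mk (k : nat) : 'M[CC]_4 := \matrix_(i, j) ((i == j) && (k <= i)%N)%:R.

Lemma Wk_iff k (x : 'rV[CC]_4) : x *m Mk k = 0 <-> forall j : 'I_4, (k <= j)%N -> x 0 j = 0.
Proof.
have E : forall j, (x *m Mk k) 0 j = if (k <= j)%N then x 0 j else 0.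
  move=> j; rewrite mxE (bigD1 j) //= big1 => [|i /negbTE ne]; last first.
    by rewrite mxE ne /= mulr0.
  by rewrite mxE eqxx /= addr0; case: (k <= j)%N; rewrite ?mulr1 ?mulr0.
split.
  by move=> h j kj; have := E j; rewrite h kj mxE.
move=> h; apply/matrixP => i j; rewrite ord1 E mxE.
by case: ifP => // /h.
Qed.

Lemma delta_Wk k (a : 'I_4) : (a < k)%N -> (delta_mx 0 a : 'rV[CC]_4) *m Mk k = 0.
Proof.
move=> ak; apply/Wk_iff => j kj; rewrite mxE /=.
have -> : (j == a) = false.
  by apply/negbTE; apply/eqP => e; move: kj; rewrite e leqNgt ak.
by [].
Qed.

Lemma delta_nWk k (a : 'I_4) : (k <= a)%N -> ~ ((delta_mx 0 a : 'rV[CC]_4) *m Mk k = 0).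
Proof.
move=> ka /Wk_iff /(_ a ka); rewrite mxE !eqxx /= => /eqP; by rewrite oner_eq0.
Qed.

Lemma delta_nz (a : 'I_4) : (delta_mx 0 a : 'rV[CC]_4) != 0.
Proof.
apply/eqP => /matrixP /(_ 0 a); rewrite !mxE !eqxx /= => /eqP; by rewrite oner_eq0.
Qed.

Lemma not_codim_full (Z : pset) : (forall x, x != 0 -> Z x) -> ~ pcodim_ge2 Z.
Proof.
move=> hZ [_ H]; apply: H.
pose i0 : 'I_4 := ord0. pose i1 : 'I_4 := inord 1. pose i2 : 'I_4 := inord 2.
have sub : forall k l, (k <= l)%N -> psubset (fun x => x *m Mk k = 0) (fun x => x *m Mk l = 0).
  move=> k l kl x _ /Wk_iff h; apply/Wk_iff => j lj; apply: h; exact: leq_trans lj.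
exists (fun x => x *m Mk 1 = 0), (fun x => x *m Mk 2 = 0), (fun x => x *m Mk 3 = 0).
split; first by apply: (irr_lin _ _ _ (delta_nz i0)); apply: delta_Wk.
split; first by apply: (irr_lin _ _ _ (delta_nz i0)); apply: delta_Wk.
split; first by apply: (irr_lin _ _ _ (delta_nz i0)); apply: delta_Wk.
split.
  split; first by apply: sub.
  move=> h; apply: (delta_nWk 1 i1); first by rewrite inordK.
  by apply: h; [exact: delta_nz | apply: delta_Wk; rewrite inordK].
split.
  split; first by apply: sub.
  move=> h; apply: (delta_nWk 2 i2); first by rewrite inordK.
  by apply: h; [exact: delta_nz | apply: delta_Wk; rewrite inordK].
by move=> x xnz _; apply: hZ.
Qed.

Lemma comb2 (D : 'rV[CC]_(1 + 1)) (x1 x2 : 'rV[CC]_4) :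
  D *m col_mx x1 x2 = (lsubmx D) 0 0 *: x1 + (rsubmx D) 0 0 *: x2.
Proof.
by rewrite -{1}[D]hsubmxK mul_row_col {1}[lsubmx D]mx11_scalar {1}[rsubmx D]mx11_scalar !mul_scalar_mx.
Qed.

Lemma nz_row m n (A : 'M[CC]_(m, n)) : A != 0 -> exists i, row i A != 0.
Proof.
move=> Anz; apply: NNPP => H; move/eqP: Anz; apply; apply/row_matrixP => i.
by rewrite row0; apply/eqP; apply: NNPP => H2; apply: H; exists i; apply/negP.
Qed.

Definition LL (l1 l2 : 'I_4 -> CC) : 'M[CC]_(4, 2) :=
  \matrix_(k, r) (if r == 0 then l1 k else l2 k).

Lemma sum_delta (a : 'I_4) (F : 'I_4 -> CC) : \sum_k (k == a)%:R * F k = F a.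
Proof.
rewrite (bigD1 a) //= big1 => [|k /negbTE ->]; last by rewrite mul0r.
by rewrite eqxx mul1r addr0.
Qed.

Lemma dim2_L (l1 l2 : 'I_4 -> CC) (a b : 'I_4) (c : CC) : c != 0 ->
  l1 a = 0 -> l1 b = c -> l2 a = - c -> l2 b = 0 ->
  Dim2 (fun x => x *m LL l1 l2 = 0).
Proof.
move=> cnz l1a l1b l2a l2b.
have rf : row_full (LL l1 l2).
  apply/row_fullP.
  exists (\matrix_(r < 2, k < 4) (if r == 0 then (k == b)%:R / c else - (k == a)%:R / c)).
  apply/matrixP => r s; rewrite !mxE.
  have [r0|r1] := eqVneq r 0.
    rewrite r0 (eq_bigr (fun j => (j == b)%:R * LL l1 l2 j s / c)); last first.
      by move=> j _; rewrite mxE eqxx mulrAC.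
    rewrite -mulr_suml sum_delta mxE.
    case: (boolP (s == 0)) => [/eqP s0|s1]; first by rewrite s0 eqxx l1b mulfV.
    by rewrite l2b mul0r eq_sym (negbTE s1).
  rewrite (eq_bigr (fun j => - ((j == a)%:R * LL l1 l2 j s / c))); last first.
    by move=> j _; rewrite mxE (negbTE r1) !mulNr mulrAC.
  rewrite sumrN -mulr_suml sum_delta mxE.
  case: (boolP (s == 0)) => [/eqP s0|s1].
    by rewrite l1a mul0r oppr0 s0; case: r r1 => [[|[|]]].
  rewrite l2a mulNr opprK mulfV //.
  by case: r r1 s s1 => [[|[|]]] // ? _ [[|[|]]].
have rk : \rank (kermx (LL l1 l2)) = 2%N.
  by rewrite mxrank_ker; move: rf; rewrite /row_full => /eqP ->.
move=> x1 x2 y h1 h2 hy ind.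
pose X : 'M[CC]_(1 + 1, 4) := col_mx x1 x2.
have sX : (X <= kermx (LL l1 l2))%MS.
  by apply/sub_kermxP; rewrite mul_col_mx h1 h2 col_mx0.
have fX : row_free X.
  rewrite -kermx_eq0; apply/negP => /negP knz.
  have [i ri] := nz_row _ _ _ knz.
  have := mulmx_ker X; move=> /(congr1 (row i)); rewrite row_mul row0 comb2.
  move=> /ind [e1 e2]; move: ri; apply/negP; rewrite negbK.
  have l0 : lsubmx (row i (kermx X)) = 0 by apply/matrixP => p q; rewrite !ord1 e1 mxE.
  have r0 : rsubmx (row i (kermx X)) = 0 by apply/matrixP => p q; rewrite !ord1 e2 mxE.
  by rewrite -[row i _]hsubmxK l0 r0 row_mx0.
have rX : \rank X = 2%N by move: fX; rewrite /row_free => /eqP.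
have kX : (kermx (LL l1 l2) <= X)%MS.
  by have := mxrank_leqif_sup sX => /leqifP; rewrite rX rk ltnn; case: ifP.
have : (y <= X)%MS by apply: submx_trans kX; apply/sub_kermxP.
case/submxP => D ->; rewrite comb2; eexists; eexists; reflexivity.
Qed.

Definition F4 (f : 'I_4 -> 'M[CC]_(1, 4)) : 'M[CC]_4 := \matrix_(i, k) f i 0 k.
Definition GT (g : 'I_4 -> 'M[CC]_(4, 1)) : 'M[CC]_4 := \matrix_(k, j) g j k 0.

Lemma row_F4 f i : row i (F4 f) = f i.
Proof. by apply/matrixP => a b; rewrite ord1 !mxE. Qed.

Lemma lin_F4 (lam : 'rV[CC]_4) f : lincomb lam f = lam *m F4 f.
Proof. by rewrite mulmx_sum_row /lincomb; apply: eq_bigr => i _; rewrite row_F4. Qed.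

Lemma lin_GT (lam : 'rV[CC]_4) g : lincomb lam g = GT g *m lam^T.
Proof.
apply/matrixP => k z; rewrite ord1 /lincomb summxE !mxE; apply: eq_bigr => j _.
by rewrite !mxE mulrC.
Qed.

Lemma mul_GT m (S : 'M[CC]_(m, 4)) g r j : (S *m GT g) r j = (S *m g j) r 0.
Proof. by rewrite !mxE; apply: eq_bigr => k _; rewrite mxE. Qed.

Lemma F4_mul f (h : 'M[CC]_(4, 1)) k : (F4 f *m h) k 0 = (f k *m h) 0 0.
Proof. by rewrite !mxE; apply: eq_bigr => l _; rewrite mxE. Qed.

Lemma rV_free (X : 'M[CC]_(1, 4)) : row_free X = (X != 0).
Proof. by rewrite /row_free rank_rV; case: (X != 0). Qed.

Lemma cV_full (X : 'M[CC]_(4, 1)) : row_full X = (X != 0).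
Proof. by rewrite /row_full -mxrank_tr rank_rV trmx_eq0; case: (X != 0). Qed.

Lemma unit_of_inj (A : 'M[CC]_4) : (forall v : 'rV_4, v != 0 -> v *m A != 0) -> A \in unitmx.
Proof.
move=> h; rewrite -row_free_unit -kermx_eq0; apply/negP => /negP knz.
have [i ri] := nz_row _ _ _ knz.
by move: (h _ ri); rewrite -row_mul mulmx_ker row0 eqxx.
Qed.

Lemma nonunit_ker (A : 'M[CC]_4) : A \notin unitmx -> exists v : 'rV_4, v != 0 /\ v *m A = 0.
Proof.
move=> nu; apply: NNPP => H; move/negP: nu; apply; apply: unit_of_inj => v vnz.
by apply/eqP => e; apply: H; exists v.
Qed.

Lemma rep_diag n m k (f : 'I_4 -> 'M[CC]_(n, m)) (g : 'I_4 -> 'M[CC]_(m, k)) i :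
  is_rep f g -> f i *m g i = 0.
Proof.
move=> r; have e := r i i.
apply/matrixP => a b; have := congr1 (fun M : 'M[CC]_(n, k) => M a b) e; rewrite /= !mxE.
by rewrite -mulr2n => /eqP; rewrite mulrn_eq0 /= => /eqP.
Qed.

Lemma rep_anti n m k (f : 'I_4 -> 'M[CC]_(n, m)) (g : 'I_4 -> 'M[CC]_(m, k)) i j :
  is_rep f g -> f j *m g i = - (f i *m g j).
Proof. by move=> r; apply/eqP; rewrite -addr_eq0; apply/eqP; apply: r. Qed.

Lemma LL_zero l1 l2 (lam : 'rV[CC]_4) :
  \sum_k lam 0 k * l1 k = 0 -> \sum_k lam 0 k * l2 k = 0 -> lam *m LL l1 l2 = 0.
Proof.
move=> h1 h2; apply/matrixP => a r; rewrite ord1 !mxE.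
case: (boolP (r == 0)) => r0.
  by rewrite -[RHS]h1; apply: eq_bigr => k _; rewrite mxE r0.
by rewrite -[RHS]h2; apply: eq_bigr => k _; rewrite mxE (negbTE r0).
Qed.

Lemma scal11 (S : 'M[CC]_1) (A : 'M[CC]_(1, 4)) (B : 'M[CC]_4) :
  S != 0 -> (S *m A <= B)%MS -> (A <= B)%MS.
Proof.
move=> Snz; rewrite [S]mx11_scalar mul_scalar_mx => h.
have s0 : S 0 0 != 0.
  by apply: contraNneq Snz => e; rewrite [S]mx11_scalar e; apply/eqP/matrixP => a b; rewrite !mxE mul0rn.
by rewrite -(scalerK s0 A); apply: scalemx_sub.
Qed.

Lemma mx11_nz (A : 'M[CC]_1) : A != 0 -> A 0 0 != 0.
Proof.
by apply: contraNneq => e; rewrite [A]mx11_scalar e; apply/eqP/matrixP => a b; rewrite !mxE mul0rn.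
Qed.

Lemma loc_inj_of (f : 'I_4 -> 'M[CC]_(1, 4)) (g : 'I_4 -> 'M[CC]_(4, 1)) i j :
  is_rep f g -> f i *m g j != 0 -> locally_injective f.
Proof.
move=> r nz; have cnz := mx11_nz _ nz.
pose l1 k := (f k *m g j) 0 0; pose l2 k := (f k *m g i) 0 0.
exists (fun x => x *m LL l1 l2 = 0); split.
  apply: codim2; first exact: closed_ker.
  apply: (dim2_L _ _ j i _ cnz).
  - by rewrite /l1 rep_diag // mxE.
  - by [].
  - by rewrite /l2 (rep_anti _ _ _ _ _ i j r) mxE.
  - by rewrite /l2 rep_diag // mxE.
move=> lam _ nZ; rewrite rV_free lin_F4; apply/eqP => e; apply: nZ.
have E : forall h : 'M[CC]_(4, 1), \sum_k lam 0 k * (f k *m h) 0 0 = ((lam *m F4 f) *m h) 0 0.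
  by move=> h; rewrite -mulmxA mxE; apply: eq_bigr => k _; rewrite F4_mul.
by apply: LL_zero; rewrite /l1 /l2 E e mul0mx mxE.
Qed.

Lemma loc_surj_of (f : 'I_4 -> 'M[CC]_(1, 4)) (g : 'I_4 -> 'M[CC]_(4, 1)) i j :
  is_rep f g -> f i *m g j != 0 -> locally_surjective g.
Proof.
move=> r nz; have cnz := mx11_nz _ nz.
pose l1 k := (f i *m g k) 0 0; pose l2 k := (f j *m g k) 0 0.
exists (fun x => x *m LL l1 l2 = 0); split.
  apply: codim2; first exact: closed_ker.
  apply: (dim2_L _ _ i j _ cnz).
  - by rewrite /l1 rep_diag // mxE.
  - by [].
  - by rewrite /l2 (rep_anti _ _ _ _ _ i j r) mxE.
  - by rewrite /l2 rep_diag // mxE.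
move=> lam _ nZ; rewrite cV_full; apply/eqP => e; apply: nZ.
have E : forall h, \sum_k lam 0 k * (f h *m g k) 0 0 = (f h *m lincomb lam g) 0 0.
  move=> h; rewrite /lincomb mulmx_sumr summxE; apply: eq_bigr => k _.
  by rewrite -scalemxAr [in RHS]mxE.
by apply: LL_zero; rewrite /l1 /l2 E e mulmx0 mxE.
Qed.

Lemma not_loc_inj (f : 'I_4 -> 'M[CC]_(1, 4)) : (forall i, f i = 0) -> ~ locally_injective f.
Proof.
move=> f0 [Z [cZ h]]; apply: (not_codim_full _ _ cZ) => x xnz.
apply: NNPP => nz; have := h x xnz nz; rewrite rV_free /lincomb big1 ?eqxx //.
by move=> i _; rewrite f0 scaler0.
Qed.

Lemma not_loc_surj (g : 'I_4 -> 'M[CC]_(4, 1)) : (forall i, g i = 0) -> ~ locally_surjective g.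
Proof.
move=> g0 [Z [cZ h]]; apply: (not_codim_full _ _ cZ) => x xnz.
apply: NNPP => nz; have := h x xnz nz; rewrite cV_full /lincomb big1 ?eqxx //.
by move=> i _; rewrite g0 scaler0.
Qed.

Lemma stable_semi th n m k (f : 'I_4 -> 'M[CC]_(n, m)) (g : 'I_4 -> 'M[CC]_(m, k)) :
  stable th f g -> semistable th f g.
Proof.
move=> [h0 h]; split => // Sm S0 S1 sub.
case: (boolP ((\rank Sm, \rank S0, \rank S1) == (0%N, 0%N, 0%N))) => [/eqP [-> -> ->]|n0].
  by rewrite /theta_dot !mulr0 !addr0.
case: (boolP ((\rank Sm, \rank S0, \rank S1) == (n, m, k))) => [/eqP [-> -> ->]|nN].
  by rewrite h0.
exact: Order.POrderTheory.ltW (h _ _ _ sub n0 nN).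
Qed.

Lemma thv (a g : RR) x y z :
  theta_dot (a, - (a + g) / 4%:R, g) x y z = a * x%:R + (- (a + g) / 4%:R) * y%:R + g * z%:R.
Proof. by []. Qed.

Lemma semi1 (a c : RR) (f : 'I_4 -> 'M[CC]_(1, 4)) (g : 'I_4 -> 'M[CC]_(4, 1)) : 0 < a -> c < - a -> is_rep f g ->
  semistable (a, - (a + c) / 4%:R, c) f g ->
  GT g \in unitmx /\ exists i j, f i *m g j != 0.
Proof.
move=> ha hc r [_ hs].
have U : GT g \in unitmx.
  apply: NNPP => nu0; have nu : GT g \notin unitmx by apply/negP.
  have [v [vnz vG]] := nonunit_ker _ nu.
  have vg : forall i, v *m g i = 0.
    by move=> i; apply/matrixP => x y; rewrite !ord1 -mul_GT vG !mxE.
  have sub : is_subrep f g (0 : 'M_1) (<<v>>%MS) (0 : 'M_1).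
    move=> i; split; first by rewrite mul0mx sub0mx.
    apply: submx_trans (submxMr (g i) (_ : (<<v>> <= v)%MS)) _; first by rewrite genmxE.
    by rewrite vg sub0mx.
  have := hs _ _ _ sub; rewrite thv !mxrank0 genmxE rank_rV vnz /= => H; lra.
split => //; apply: NNPP => H.
have all0 : forall i j, f i *m g j = 0.
  move=> i j; apply: NNPP => H2; apply: H; exists i, j; exact/eqP.
have sub : is_subrep f g (1%:M : 'M_1) (F4 f) (0 : 'M_1).
  move=> i; split; first by rewrite mul1mx -row_F4 row_sub.
  have -> : F4 f *m g i = 0 by apply/matrixP => x y; rewrite ord1 F4_mul all0 !mxE.
  exact: sub0mx.
have := hs _ _ _ sub; rewrite thv mxrank0 mxrank1 => H2.
have : 0 <= (\rank (F4 f))%:R :> RR by apply: ler0n.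
move=> H3.
have : 0 <= - (a + c) / 4%:R * (\rank (F4 f))%:R.
  by apply: mulr_ge0 => //; apply: divr_ge0; lra.
move=> H4; lra.
Qed.

Lemma rank1_cases (S : 'M[CC]_1) : \rank S = 0%N \/ (\rank S = 1%N /\ S != 0).
Proof.
have := rank_leq_row S; case: (boolP (S == 0)) => [/eqP ->|nz]; first by rewrite mxrank0; left.
by rewrite rank_rV nz; right.
Qed.

Lemma stab1 (a c : RR) (f : 'I_4 -> 'M[CC]_(1, 4)) (g : 'I_4 -> 'M[CC]_(4, 1)) :
  0 < a -> c < - a -> is_rep f g ->
  GT g \in unitmx -> (exists i j, f i *m g j != 0) ->
  stable (a, - (a + c) / 4%:R, c) f g.
Proof.
move=> ha hc r U [i0 [j0 nz]]; split; first by rewrite thv; lra.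
move=> Sm S0 S1 sub n0 nN.
have rS0 := rank_leq_col S0.
case: (rank1_cases S1) => [r1|[r1 _]].
  have S10 : S1 = 0 by apply/eqP; rewrite -mxrank_eq0 r1.
  have S00 : S0 = 0.
    have : S0 *m GT g = 0.
      apply/matrixP => x y; rewrite mul_GT [in RHS]mxE.
      have := proj2 (sub y); rewrite S10 submx0 => /eqP ->; by rewrite mxE.
    by move=> e; rewrite -(mulmxK U S0) e mul0mx.
  case: (rank1_cases Sm) => [rm|[rm Smnz]].
    by move: n0; rewrite rm S00 mxrank0 r1 eqxx.
  exfalso; move: nz; apply/negP; rewrite negbK.
  have := scal11 _ _ _ Smnz (proj1 (sub i0)); rewrite S00 submx0 => /eqP ->.
  by rewrite mul0mx.
rewrite r1 in nN *; rewrite thv.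
case: (rank1_cases Sm) => [rm|[rm _]]; rewrite rm in nN *.
  move: (\rank S0) rS0 => [|[|[|[|[|//]]]]] _; lra.
move: (\rank S0) rS0 nN => [|[|[|[|[|//]]]]] _ nN; try lra.
by rewrite eqxx in nN.
Qed.

Lemma semi2 (a c : RR) (f : 'I_4 -> 'M[CC]_(1, 4)) (g : 'I_4 -> 'M[CC]_(4, 1)) :
  0 < a -> c < 0 -> - a < c -> is_rep f g ->
  semistable (a, - (a + c) / 4%:R, c) f g ->
  F4 f \in unitmx /\ exists i j, f i *m g j != 0.
Proof.
move=> ha hc0 hc r [_ hs].
have U : F4 f \in unitmx.
  apply: NNPP => nu0.
  have sub : is_subrep f g (1%:M : 'M_1) (F4 f) (1%:M : 'M_1).
    by move=> i; split; [rewrite mul1mx -row_F4 row_sub | apply: submx1].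
  have := hs _ _ _ sub; rewrite thv !mxrank1.
  have : (\rank (F4 f) != 4)%N by apply/negP => /eqP e; apply: nu0; rewrite -row_free_unit /row_free e.
  move: (\rank (F4 f)) (rank_leq_col (F4 f)) => [|[|[|[|[|//]]]]] _ ne H; try lra.
  by rewrite eqxx in ne.
split => //; apply: NNPP => H.
have all0 : forall i j, f i *m g j = 0.
  move=> i j; apply: NNPP => H2; apply: H; exists i, j; exact/eqP.
have sub : is_subrep f g (1%:M : 'M_1) (F4 f) (0 : 'M_1).
  move=> i; split; first by rewrite mul1mx -row_F4 row_sub.
  have -> : F4 f *m g i = 0 by apply/matrixP => x y; rewrite ord1 F4_mul all0 !mxE.
  exact: sub0mx.
have := hs _ _ _ sub; rewrite thv mxrank0 mxrank1 (mxrank_unit U) => H2; lra.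
Qed.

Lemma stab2 (a c : RR) (f : 'I_4 -> 'M[CC]_(1, 4)) (g : 'I_4 -> 'M[CC]_(4, 1)) :
  0 < a -> c < 0 -> - a < c -> is_rep f g ->
  F4 f \in unitmx -> (exists i j, f i *m g j != 0) ->
  stable (a, - (a + c) / 4%:R, c) f g.
Proof.
move=> ha hc0 hc r U [i0 [j0 nz]]; split; first by rewrite thv; lra.
move=> Sm S0 S1 sub n0 nN.
have rS0 := rank_leq_col S0.
case: (rank1_cases Sm) => [rm|[rm Smnz]].
  rewrite rm thv in n0 *.
  case: (rank1_cases S1) => [r1|[r1 _]]; rewrite r1 in n0 *.
    move: (\rank S0) rS0 n0 => [|[|[|[|[|//]]]]] _ n0; try lra.
    by rewrite eqxx in n0.
  move: (\rank S0) rS0 => [|[|[|[|[|//]]]]] _; lra.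
have sF : (F4 f <= S0)%MS.
  apply/row_subP => i; rewrite row_F4; exact: scal11 _ _ _ Smnz (proj1 (sub i)).
have fS0 : row_full S0.
  rewrite /row_full eqn_leq rS0 /=; rewrite -{1}(mxrank_unit U); exact: mxrankS.
have sg : forall i, (g i <= S1)%MS.
  move=> i; rewrite -[g i]mul1mx; apply: submx_trans (submxMr _ _) (proj2 (sub i)).
  by rewrite sub1mx.
case: (rank1_cases S1) => [r1|[r1 _]].
  have S10 : S1 = 0 by apply/eqP; rewrite -mxrank_eq0 r1.
  exfalso; move: nz; apply/negP; rewrite negbK.
  by have := sg j0; rewrite S10 submx0 => /eqP ->; rewrite mulmx0.
exfalso; move: nN; rewrite rm r1.
by move: fS0; rewrite /row_full => /eqP ->; rewrite eqxx.
Qed.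

Lemma c1_P (f : 'I_4 -> 'M[CC]_(1, 4)) (g : 'I_4 -> 'M[CC]_(4, 1)) : is_rep f g ->
  (GT g \in unitmx /\ exists i j, f i *m g j != 0) <->
  (globally_surjective g /\ locally_injective f).
Proof.
move=> r; split.
  move=> [U [i [j nz]]]; split; last exact: loc_inj_of r nz.
  move=> lam lnz; rewrite cV_full lin_GT; apply/eqP => e.
  by move: lnz; rewrite -trmx_eq0 -(mulKmx U lam^T) e mulmx0 eqxx.
move=> [gs li].
have U : GT g \in unitmx.
  rewrite -unitmx_tr; apply: unit_of_inj => v vnz; rewrite -trmx_eq0 trmx_mul trmxK -lin_GT.
  by rewrite -cV_full; apply: gs.
split => //; apply: NNPP => H.
have all0 : forall i j, f i *m g j = 0.
  move=> i j; apply: NNPP => H2; apply: H; exists i, j; exact/eqP.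
apply: (not_loc_inj _ _ li) => i.
have e : f i *m GT g = 0.
  by apply/matrixP => x y; rewrite mul_GT all0 !mxE.
by rewrite -(mulmxK U (f i)) e mul0mx.
Qed.

Lemma c2_P (f : 'I_4 -> 'M[CC]_(1, 4)) (g : 'I_4 -> 'M[CC]_(4, 1)) : is_rep f g ->
  (F4 f \in unitmx /\ exists i j, f i *m g j != 0) <->
  (globally_injective f /\ locally_surjective g).
Proof.
move=> r; split.
  move=> [U [i [j nz]]]; split; last exact: loc_surj_of r nz.
  move=> lam lnz; rewrite rV_free lin_F4; apply/eqP => e.
  by move: lnz; rewrite -(mulmxK U lam) e mul0mx eqxx.
move=> [gi ls].
have U : F4 f \in unitmx.
  apply: unit_of_inj => v vnz; rewrite -lin_F4 -rV_free; exact: gi.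
split => //; apply: NNPP => H.
have all0 : forall i j, f i *m g j = 0.
  move=> i j; apply: NNPP => H2; apply: H; exists i, j; exact/eqP.
apply: (not_loc_surj _ _ ls) => j.
have e : F4 f *m g j = 0.
  by apply/matrixP => x y; rewrite ord1 F4_mul all0 !mxE.
by rewrite -(mulKmx U (g j)) e mulmx0.
Qed.

Theorem mainTheorem13 (alpha gamma : RR) :
  0 < alpha -> gamma < 0 ->
  let theta : RR * RR * RR := (alpha, - (alpha + gamma) / 4%:R, gamma) in
  (gamma < - alpha ->
     forall (f : 'I_4 -> 'M[CC]_(1, 4)) (g : 'I_4 -> 'M[CC]_(4, 1)),
       is_rep f g ->
       (semistable theta f g <-> globally_surjective g /\ locally_injective f) /\
       (stable theta f g <-> globally_surjective g /\ locally_injective f)) /\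
  (- alpha < gamma ->
     forall (f : 'I_4 -> 'M[CC]_(1, 4)) (g : 'I_4 -> 'M[CC]_(4, 1)),
       is_rep f g ->
       (semistable theta f g <-> globally_injective f /\ locally_surjective g) /\
       (stable theta f g <-> globally_injective f /\ locally_surjective g)).
Proof.
move=> ha hc theta; split.
  move=> hc1 f g r.
  have hA : semistable theta f g -> globally_surjective g /\ locally_injective f.
    by move=> s; apply/(c1_P _ _ r); exact: (semi1 alpha gamma f g ha hc1 r s).
  have hB : globally_surjective g /\ locally_injective f -> stable theta f g.
    by move=> /(c1_P _ _ r) [U E]; exact: (stab1 alpha gamma f g ha hc1 r U E).
  split; split => //.
    by move=> P; apply: stable_semi; apply: hB.
  by move=> s; apply: hA; apply: stable_semi.
move=> hc1 f g r.
have hA : semistable theta f g -> globally_injective f /\ locally_surjective g.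
  by move=> s; apply/(c2_P _ _ r); exact: (semi2 alpha gamma f g ha hc hc1 r s).
have hB : globally_injective f /\ locally_surjective g -> stable theta f g.
  by move=> /(c2_P _ _ r) [U E]; exact: (stab2 alpha gamma f g ha hc hc1 r U E).
split; split => //.
  by move=> P; apply: stable_semi; apply: hB.
by move=> s; apply: hA; apply: stable_semi.
Qed.
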